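(* Let $P$ be a graded poset and $\sim$ a Reiner–Stamate equivalence relation on $\operatorname{Int}(P)$. Then the projection functor $\pi:P\to P/\sim$, $a\mapsto[a]$, $f\mapsto[f]$, is an almost discrete fibration such that every morphism of $P/\sim$ has a lift in $P$.
   Context: A graded poset has a rank function $\rho$ with $\rho(b)=\rho(a)+1$ when $b$ covers $a$; it is regarded as a category with a unique morphism $a\to b$ iff $a\le b$. $\operatorname{Int}(P)$ is the set of closed intervals $[a,b]$, $a\le b$, identified with the morphisms $a\le b$. An equivalence relation $\sim$ on $\operatorname{Int}(P)$ is Reiner–Stamate if: (A1) $[a,b]\sim[a',b']$ and $[b,c]\sim[b',c']$ imply $[a,c]\sim[a',c']$; (A2) with $\mathrm{int}_{[a,b]}:[a,b]\to(\operatorname{Int}(P)/\sim)^2$, $c\mapsto(\widetilde{[a,c]},\widetilde{[c,b]})$, whenever $[a,b]\sim[a',b']$ there is a unique map $\tau:[a,b]\to[a',b']$ with $\mathrm{int}_{[a',b']}\circ\tau=\mathrm{int}_{[a,b]}$; (A4) writing $x\sim y$ for $[x,x]\sim[y,y]$, if $a\le b_1$, $b_2\le c$, $b_1\sim b_2$, there exist $a'\le b'\le c'$ with $[a,b_1]\sim[a',b']$ and $[b_2,c]\sim[b',c']$. The quotient category $P/\sim$ has objects the classes $[a]$ of elements of $P$ under $x\sim y$, morphisms the classes $[a\le b]$ of intervals, and composition $[b_2\le c]\circ[a\le b_1]=[a'\le c']$ for $a'\le b'\le c'$ as in (A4); it is an indiscretely based category. A factorization $q=g_0\circ\cdots\circ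 g_{n+1}$ ($n\ge0$) is nontrivial if no $g_i$ is an isomorphism. A functor $F:\mathcal C\to\mathcal D$ is an almost discrete fibration if for every morphism $q$ of $\mathcal D$, every $p$ with $F(p)=q$ and every nontrivial factorization $q=g_0\circ\cdots\circ g_{n+1}$ there is a nontrivial factorization $p=f_0\circ\cdots\circ f_{n+1}$ with $F(f_i)=g_i$, unique up to $(f_i)\sim(f'_i)$ iff there are isomorphisms $h_0,\dots,h_n$ with $f'_0=f_0\circ h_0$, $f'_i=h_{i-1}^{-1}\circ f_i\circ h_i$ ($1\le i\le n$), $f'_{n+1}=h_n^{-1}\circ f_{n+1}$. *)

(* Defs.v *)
From Stdlib Require Import Arith.

Set Implicit Arguments.

Definition partial_order {P : Type} (le : P -> P -> Prop) : Prop :=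
  (forall a, le a a) /\
  (forall a b, le a b -> le b a -> a = b) /\
  (forall a b c, le a b -> le b c -> le a c).

Definition covers {P : Type} (le : P -> P -> Prop) (a b : P) : Prop :=
  le a b /\ a <> b /\ (forall c, le a c -> le c b -> c = a \/ c = b).

Definition graded {P : Type} (le : P -> P -> Prop) : Prop :=
  exists rho : P -> nat, forall a b, covers le a b -> rho b = S (rho a).

Definition in_int {P : Type} (le : P -> P -> Prop) (a b c : P) : Prop :=
  le a c /\ le c b.

(* ---------- Equivalence relations on Int(P) ----------
   An interval [a,b] (a <= b) is the pair (a,b); the relation
   R a b a' b' means [a,b] ~ [a',b']. *)

Definition int_equivalence {P : Type} (le : P -> P -> Prop)
    (R : P -> P -> P -> P -> Prop) : Prop :=
  (forall a b a' b', R a b a' b' -> le a b /\ le a' b') /\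
  (forall a b, le a b -> R a b a b) /\
  (forall a b a' b', R a b a' b' -> R a' b' a b) /\
  (forall a b a' b' a'' b'', R a b a' b' -> R a' b' a'' b'' -> R a b a'' b'').

Definition pt_equiv {P : Type} (R : P -> P -> P -> P -> Prop) (x y : P) : Prop :=
  R x x y y.

Definition axiom_A1 {P : Type} (R : P -> P -> P -> P -> Prop) : Prop :=
  forall a b c a' b' c', R a b a' b' -> R b c b' c' -> R a c a' c'.

(* int_[a,b](c) = ([a,c]~, [c,b]~); a map tau : [a,b] -> [a',b'] is a function
   defined on [a,b] with values in [a',b'] (two such maps are equal iff they
   agree on [a,b]). *)
Definition int_compatible {P : Type} (le : P -> P -> Prop)
    (R : P -> P -> P -> P -> Prop) (a b a' b' : P) (tau : P -> P) : Prop :=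
  forall c, in_int le a b c ->
    in_int le a' b' (tau c) /\ R a c a' (tau c) /\ R c b (tau c) b'.

Definition axiom_A2 {P : Type} (le : P -> P -> Prop)
    (R : P -> P -> P -> P -> Prop) : Prop :=
  forall a b a' b', R a b a' b' ->
    (exists tau, int_compatible le R a b a' b' tau) /\
    (forall tau1 tau2, int_compatible le R a b a' b' tau1 ->
       int_compatible le R a b a' b' tau2 ->
       forall c, in_int le a b c -> tau1 c = tau2 c).

Definition axiom_A4 {P : Type} (le : P -> P -> Prop)
    (R : P -> P -> P -> P -> Prop) : Prop :=
  forall a b1 b2 c, le a b1 -> le b2 c -> pt_equiv R b1 b2 ->
    exists a' b' c', le a' b' /\ le b' c' /\ R a b1 a' b' /\ R b2 c b' c'.

Definition reiner_stamate {P : Type} (le : P -> P -> Prop)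
    (R : P -> P -> P -> P -> Prop) : Prop :=
  int_equivalence le R /\ axiom_A1 R /\ axiom_A2 le R /\ axiom_A4 le R.

(* ---------- The category P (thin) ----------
   A morphism x -> y is a pair (x,y) with le x y.  Composition g o f
   is defined iff cod f = dom g and is then (dom f, cod g). *)

Definition is_mor {P : Type} (le : P -> P -> Prop) (f : P * P) : Prop :=
  le (fst f) (snd f).

Definition pcomp_eq {P : Type} (g f h : P * P) : Prop :=
  snd f = fst g /\ h = (fst f, snd g).

Definition pinv {P : Type} (h : P * P) : P * P := (snd h, fst h).

(* f : x -> y is an isomorphism in P iff there is a morphism y -> x
   (the two composites are then automatically identities, P being thin). *)
Definition piso {P : Type} (le : P -> P -> Prop) (f : P * P) : Prop :=
  le (snd f) (fst f).

Definition p_nontriv_fact {P : Type} (le : P -> P -> Prop)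
    (p : P * P) (n : nat) (f : nat -> P * P) : Prop :=
  (forall i, i <= S n -> is_mor le (f i) /\ ~ piso le (f i)) /\
  (forall i, i <= n -> snd (f (S i)) = fst (f i)) /\
  fst (f (S n)) = fst p /\ snd (f 0) = snd p.

Definition p_fact_equiv {P : Type} (le : P -> P -> Prop)
    (n : nat) (f f' : nat -> P * P) : Prop :=
  exists h : nat -> P * P,
    (forall i, i <= n -> is_mor le (h i) /\ piso le (h i)) /\
    pcomp_eq (f 0) (h 0) (f' 0) /\
    (forall i, 1 <= i -> i <= n ->
       exists m, pcomp_eq (f i) (h i) m /\ pcomp_eq (pinv (h (i - 1))) m (f' i)) /\
    pcomp_eq (pinv (h n)) (f (S n)) (f' (S n)).

(* ---------- The quotient category P/~ ----------
   A morphism of P/~ is represented by an interval (a,b); two representatives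
   denote the same morphism iff they are ~-related.  Objects are classes [x]
   under pt_equiv; [a <= b] : [a] -> [b]. *)

Definition qeq {P : Type} (R : P -> P -> P -> P -> Prop) (f g : P * P) : Prop :=
  R (fst f) (snd f) (fst g) (snd g).

(* h represents the composite [b2 <= c] o [a <= b1], defined when b1 ~ b2,
   as [a' <= c'] for a' <= b' <= c' as in (A4). *)
Definition qcomp {P : Type} (le : P -> P -> Prop) (R : P -> P -> P -> P -> Prop)
    (g f h : P * P) : Prop :=
  pt_equiv R (snd f) (fst g) /\
  exists a' b' c', le a' b' /\ le b' c' /\
    R (fst f) (snd f) a' b' /\ R (fst g) (snd g) b' c' /\ qeq R (a', c') h.

Definition qid {P : Type} (x : P) : P * P := (x, x).

Definition qiso {P : Type} (le : P -> P -> Prop) (R : P -> P -> P -> P -> Prop)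
    (g : P * P) : Prop :=
  exists g', is_mor le g' /\
    qcomp le R g' g (qid (fst g)) /\ qcomp le R g g' (qid (snd g)).

(* qcomposite g k j h : h represents g_j o g_{j+1} o ... o g_{j+k} *)
Fixpoint qcomposite {P : Type} (le : P -> P -> Prop) (R : P -> P -> P -> P -> Prop)
    (g : nat -> P * P) (k j : nat) (h : P * P) : Prop :=
  match k with
  | 0 => qeq R (g j) h
  | S k' => exists h', qcomposite le R g k' (S j) h' /\ qcomp le R (g j) h' h
  end.

Definition q_nontriv_fact {P : Type} (le : P -> P -> Prop)
    (R : P -> P -> P -> P -> Prop) (q : P * P) (n : nat) (g : nat -> P * P) : Prop :=
  (forall i, i <= S n -> is_mor le (g i) /\ ~ qiso le R (g i)) /\
  qcomposite le R g (S n) 0 q.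

(* ---------- The projection functor pi : P -> P/~ ----------
   pi(a) = [a], pi(a <= b) = [a <= b]; so pi(f) = g iff qeq R f g. *)

Definition proj_is_functor {P : Type} (le : P -> P -> Prop)
    (R : P -> P -> P -> P -> Prop) : Prop :=
  (forall a, qeq R (qid a) (qid a)) /\
  (forall f g h, is_mor le f -> is_mor le g -> pcomp_eq g f h ->
     qcomp le R g f h).

Definition proj_almost_discrete_fibration {P : Type} (le : P -> P -> Prop)
    (R : P -> P -> P -> P -> Prop) : Prop :=
  forall (q p : P * P) (n : nat) (g : nat -> P * P),
    is_mor le q -> is_mor le p -> qeq R p q ->
    q_nontriv_fact le R q n g ->
    (exists f : nat -> P * P,
       p_nontriv_fact le p n f /\ (forall i, i <= S n -> qeq R (f i) (g i))) /\
    (forall f f' : nat -> P * P,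
       p_nontriv_fact le p n f -> (forall i, i <= S n -> qeq R (f i) (g i)) ->
       p_nontriv_fact le p n f' -> (forall i, i <= S n -> qeq R (f' i) (g i)) ->
       p_fact_equiv le n f f').

Definition proj_has_lifts {P : Type} (le : P -> P -> Prop)
    (R : P -> P -> P -> P -> Prop) : Prop :=
  forall q : P * P, is_mor le q -> exists p, is_mor le p /\ qeq R p q.

(* Main.v *)
Require Import Defs.
From Stdlib Require Import Arith Lia Classical ClassicalEpsilon.

Definition chainp {P : Type} (le : P -> P -> Prop) (R : P -> P -> P -> P -> Prop)
  (g f : nat -> P * P) (j k : nat) : Prop :=
  (forall i, j <= i <= j + k -> le (fst (f i)) (snd (f i)) /\
      R (fst (f i)) (snd (f i)) (fst (g i)) (snd (g i))) /\
  (forall i, j <= i < j + k -> snd (f (S i)) = fst (f i)).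

Lemma lift_ex (P : Type) (le : P -> P -> Prop) (R : P -> P -> P -> P -> Prop) :
  reiner_stamate le R -> forall g k j h p1 p2,
  qcomposite le R g k j h -> R p1 p2 (fst h) (snd h) ->
  exists f, chainp le R g f j k /\ fst (f (j + k)) = p1 /\ snd (f j) = p2.
Proof.
  intros [[Hle [Hrefl [Hsym Htrans]]] [HA1 [HA2 HA4]]] g k.
  induction k as [|k IH]; intros j h p1 p2 Hc Hp; simpl in Hc.
  - exists (fun _ => (p1, p2)). split; [split|]; simpl.
    + intros i Hi. assert (i = j) by lia. subst i. split. apply (Hle _ _ _ _ Hp).
      eapply Htrans. exact Hp. apply Hsym. exact Hc.
    + intros; lia.
    + split; reflexivity.
  - destruct Hc as [h' [Hc' [_ [a' [b' [c' [Hab [Hbc [R1 [R2 R3]]]]]]]]]].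
    unfold qeq in R3; simpl in R3.
    assert (Rp : R a' c' p1 p2) by (eapply Htrans; [exact R3| apply Hsym; exact Hp]).
    destruct (HA2 _ _ _ _ Rp) as [[tau Htau] _].
    destruct (Htau b') as [Hin [Rt1 Rt2]]. split; assumption.
    destruct (IH (S j) h' p1 (tau b') Hc') as [f [[F1 F2] [F3 F4]]].
    { apply Hsym. eapply Htrans. exact R1. exact Rt1. }
    exists (fun i => if Nat.eqb i j then (tau b', p2) else f i).
    split; [split|].
    + intros i Hi. destruct (Nat.eqb_spec i j) as [->|Hne]; simpl.
      * split. destruct Hin; assumption.
        eapply Htrans. apply Hsym. exact Rt2. apply Hsym. exact R2.
      * apply F1. lia.
    + intros i Hi. destruct (Nat.eqb_spec (S i) j) as [|Hne1]; [lia|].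
      destruct (Nat.eqb_spec i j) as [->|Hne]; simpl.
      * exact F4.
      * apply F2. lia.
    + destruct (Nat.eqb_spec (j + S k) j) as [|_]; [lia|].
      replace (j + S k) with (S j + k) by lia. split; [exact F3|].
      rewrite Nat.eqb_refl. reflexivity.
Qed.

Lemma comp_rel (P : Type) (le : P -> P -> Prop) (R : P -> P -> P -> P -> Prop) :
  reiner_stamate le R -> forall g k j h f,
  qcomposite le R g k j h -> chainp le R g f j k ->
  R (fst (f (j + k))) (snd (f j)) (fst h) (snd h).
Proof.
  intros [[Hle [Hrefl [Hsym Htrans]]] [HA1 [HA2 HA4]]] g k.
  induction k as [|k IH]; intros j h f Hc [C1 C2]; simpl in Hc.
  - rewrite Nat.add_0_r. destruct (C1 j) as [_ Hr]. lia.
    eapply Htrans. exact Hr. exact Hc.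
  - destruct Hc as [h' [Hc' [_ [a' [b' [c' [Hab [Hbc [R1 [R2 R3]]]]]]]]]].
    unfold qeq in R3; simpl in R3.
    assert (IH' := IH (S j) h' f Hc').
    replace (S j + k) with (j + S k) in IH' by lia.
    assert (X : R (fst (f (j + S k))) (snd (f (S j))) a' b').
    { eapply Htrans. apply IH'. split; intros; [apply C1|apply C2]; lia. exact R1. }
    rewrite (C2 j) in X by lia.
    assert (Y : R (fst (f j)) (snd (f j)) b' c').
    { destruct (C1 j) as [_ Hr]. lia. eapply Htrans. exact Hr. exact R2. }
    eapply Htrans. eapply HA1. exact X. exact Y. exact R3.
Qed.

Lemma lift_uniq (P : Type) (le : P -> P -> Prop) (R : P -> P -> P -> P -> Prop) :
  partial_order le -> reiner_stamate le R -> forall g k j h f f',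
  qcomposite le R g k j h -> chainp le R g f j k -> chainp le R g f' j k ->
  fst (f (j + k)) = fst (f' (j + k)) -> snd (f j) = snd (f' j) ->
  forall i, j <= i <= j + k -> f i = f' i.
Proof.
  intros PO RS. pose proof RS as [[Hle [Hrefl [Hsym Htrans]]] [HA1 [HA2 HA4]]].
  intros g k.
  induction k as [|k IH]; intros j h f f' Hc Cf Cf' E1 E2 i Hi.
  - assert (i = j) by lia. subst i. rewrite Nat.add_0_r in E1.
    destruct (f j), (f' j); simpl in *; subst; reflexivity.
  - simpl in Hc. destruct Hc as [h' [Hc' _]].
    destruct Cf as [C1 C2]. destruct Cf' as [D1 D2].
    assert (Cf1 : chainp le R g f (S j) k) by (split; intros; [apply C1|apply C2]; lia).
    assert (Cf1' : chainp le R g f' (S j) k) by (split; intros; [apply D1|apply D2]; lia).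
    pose proof (@comp_rel P le R RS g k (S j) h' f Hc' Cf1) as X.
    pose proof (@comp_rel P le R RS g k (S j) h' f' Hc' Cf1') as X'.
    replace (S j + k) with (j + S k) in X, X' by lia.
    rewrite (C2 j) in X by lia. rewrite (D2 j) in X' by lia.
    rewrite E1 in X.
    set (p1 := fst (f' (j + S k))) in *. set (p2 := snd (f' j)) in *.
    set (m := fst (f j)) in *. set (m' := fst (f' j)) in *.
    assert (Rm : R p1 m p1 m') by (eapply Htrans; [exact X| apply Hsym; exact X']).
    assert (Rm2 : R m p2 m' p2).
    { destruct (C1 j) as [_ A]. lia. destruct (D1 j) as [_ B]. lia.
      fold m in A. rewrite E2 in A. fold p2 in A. fold m' in B. fold p2 in B.
      eapply Htrans. exact A. apply Hsym. exact B. }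
    destruct (Hle _ _ _ _ Rm) as [Lm Lm'].
    destruct (Hle _ _ _ _ Rm2) as [Lm2 Lm2'].
    destruct PO as [Pr [Pa Pt]].
    assert (Lp : le p1 p2) by (eapply Pt; eauto).
    assert (Emm : m = m').
    { destruct (HA2 _ _ _ _ (Hrefl _ _ Lp)) as [_ U].
      set (tau2 := fun c => if excluded_middle_informative (c = m) then m' else c).
      assert (T1 : int_compatible le R p1 p2 p1 p2 (fun c => c)).
      { intros c [H1 H2]. split. split; assumption. split; apply Hrefl; assumption. }
      assert (T2 : int_compatible le R p1 p2 p1 p2 tau2).
      { intros c [H1 H2]. unfold tau2.
        destruct (excluded_middle_informative (c = m)) as [->|_].
        - split. split; assumption. split; assumption.
        - split. split; assumption. split; apply Hrefl; assumption. }
      assert (Hm : Defs.in_int le p1 p2 m) by (split; assumption).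
      pose proof (U _ _ T1 T2 m Hm) as Q. unfold tau2 in Q.
      destruct (excluded_middle_informative (m = m)); [exact Q| congruence]. }
    assert (Efj : f j = f' j).
    { rewrite (surjective_pairing (f j)), (surjective_pairing (f' j)). f_equal; [exact Emm | exact E2]. }
    destruct (Nat.eq_dec i j) as [->|Hne]; [exact Efj|].
    apply (IH (S j) h' f f' Hc' Cf1 Cf1').
    + replace (S j + k) with (j + S k) by lia. exact E1.
    + rewrite (C2 j), (D2 j) by lia. fold m m'. exact Emm.
    + lia.
Qed.

Lemma iso_of (P : Type) (le : P -> P -> Prop) (R : P -> P -> P -> P -> Prop) :
  partial_order le -> reiner_stamate le R -> forall x u v,
  R x x u v -> qiso le R (u, v).
Proof.
  intros [Pr [Pa Pt]] [[Hle [Hrefl [Hsym Htrans]]] [HA1 [HA2 HA4]]] x u v H.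
  destruct (HA2 _ _ _ _ (Hsym _ _ _ _ H)) as [[tau Ht] _].
  destruct (Hle _ _ _ _ H) as [_ Luv].
  destruct (Ht u) as [[T1 T2] [A _]]. split; [apply Pr|exact Luv].
  destruct (Ht v) as [[T3 T4] [_ B]]. split; [exact Luv|apply Pr].
  assert (E0 : tau u = x) by (apply Pa; assumption).
  assert (E1 : tau v = x) by (apply Pa; assumption).
  rewrite E0 in A. rewrite E1 in B.
  exists (x, x). split. unfold is_mor; simpl. apply Pr.
  split.
  - split; simpl. exact B.
    exists x, x, x. simpl. repeat split; try apply Pr.
    apply Hsym; exact H. apply Hrefl, Pr. unfold qeq; simpl. exact (Hsym _ _ _ _ A).
  - split; simpl. exact (Hsym _ _ _ _ A).
    exists x, x, x. simpl. repeat split; try apply Pr.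
    apply Hrefl, Pr. apply Hsym; exact H. unfold qeq; simpl. exact (Hsym _ _ _ _ B).
Qed.

Theorem proposition3p7 (P : Type) (le : P -> P -> Prop)
    (R : P -> P -> P -> P -> Prop) :
  partial_order le -> graded le -> reiner_stamate le R ->
  proj_is_functor le R /\ proj_almost_discrete_fibration le R /\
  proj_has_lifts le R.
Proof.
  intros PO _ RS.
  pose proof PO as [Pr [Pa Pt]].
  pose proof RS as [[Hle [Hrefl [Hsym Htrans]]] [HA1 [HA2 HA4]]].
  split; [|split].
  - split.
    + intros a. unfold qeq, qid; simpl. apply Hrefl, Pr.
    + intros [x y] [y' z] [x' z'] Hf Hg [E1 E2]. unfold is_mor in *; simpl in *.
      subst y'. injection E2 as -> ->.
      split; simpl. apply Hrefl, Pr.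
      exists x, y, z. repeat split; try assumption; apply Hrefl; try assumption.
      eapply Pt; eassumption.
  - intros q p n g Hq Hp Hpq [Hg Hcomp].
    assert (NI : forall f, (forall i, i <= S n -> qeq R (f i) (g i)) ->
               forall i, i <= S n -> ~ piso le (f i)).
    { intros f Hf i Hi Hpi. apply (proj2 (Hg i Hi)).
      assert (Hfi := Hf i Hi). unfold qeq, piso in *.
      destruct (Hle _ _ _ _ Hfi) as [L _].
      assert (Ee : fst (f i) = snd (f i)) by (apply Pa; assumption).
      rewrite Ee in Hfi. rewrite (surjective_pairing (g i)).
      exact (@iso_of P le R PO RS _ _ _ Hfi). }
    split.
    + destruct (@lift_ex P le R RS g (S n) 0 q (fst p) (snd p) Hcomp Hpq)
        as [f [[C1 C2] [F1 F2]]].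
      exists f.
      assert (Hq' : forall i, i <= S n -> qeq R (f i) (g i))
        by (intros i Hi; apply C1; lia).
      split; [|exact Hq'].
      split; [|split; [|split]].
      * intros i Hi. split. apply C1; lia. apply (NI f Hq' i Hi).
      * intros i Hi. apply C2; lia.
      * exact F1.
      * exact F2.
    + intros f f' [Fa [Fb [Fc Fd]]] Hf [Ga [Gb [Gc Gd]]] Hf'.
      assert (Cf : chainp le R g f 0 (S n)).
      { split. intros i Hi. split. apply Fa; lia. apply Hf; lia. intros i Hi; apply Fb; lia. }
      assert (Cf' : chainp le R g f' 0 (S n)).
      { split. intros i Hi. split. apply Ga; lia. apply Hf'; lia. intros i Hi; apply Gb; lia. }
      assert (EQ : forall i, i <= S n -> f i = f' i).
      { intros i Hi. apply (@lift_uniq P le R PO RS g (S n) 0 q f f' Hcomp Cf Cf').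
        simpl. congruence. congruence. lia. }
      exists (fun i => (fst (f i), fst (f i))).
      split; [|split; [|split]].
      * intros i Hi. split; apply Pr.
      * split; simpl. reflexivity. rewrite <- EQ by lia. apply surjective_pairing.
      * intros i H1 H2. exists (f i). split.
        -- split; simpl. reflexivity. apply surjective_pairing.
        -- unfold pinv; split; simpl.
           replace i with (S (i - 1)) at 1 by lia. apply Fb; lia.
           rewrite <- EQ by lia. rewrite (surjective_pairing (f i)) at 1. f_equal.
           replace i with (S (i - 1)) at 1 by lia. simpl. rewrite Fb by lia. reflexivity.
      * unfold pinv; split; simpl. apply Fb; lia.
        rewrite <- EQ by lia. rewrite (surjective_pairing (f (S n))) at 1. f_equal. apply Fb; lia.
  - intros q Hq. exists q. split. exact Hq. apply Hrefl, Hq.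
Qed.
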